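(* In the setting described in the context, the elementwise mean $\bar\sigma_h$ of the discrete Lagrange multiplier satisfies $\bar\sigma_h\le 0$ everywhere on $\Omega$, and $\bar\sigma_h=0$ on every $T\in\mathbb{N}_h$.
   Context: $\Omega\subset\mathbb{R}^d$ ($1\le d\le3$) is a bounded polyhedral domain, $f\in L^2(\Omega)$, and the obstacle $\chi\in C(\bar\Omega)\cap H^1(\Omega)$ satisfies $\chi\le 0$ on $\partial\Omega$. $\mathcal{T}_h$ is a conforming shape-regular triangulation of $\Omega$ into closed triangles; $|T|$ is the area of $T$; $\mathcal{M}_h$ is the set of all edge midpoints, $\mathcal{M}_h^i$ the set of midpoints of interior edges, $\mathcal{V}_h^i$ the set of interior vertices, $\mathcal{M}_T$ the set of the three edge midpoints of $T$. $V_h=\{v\in H^1_0(\Omega): v|_T\in\mathbb{P}_2(T)\ \forall T\}$ with nodal basis $\{\psi_z: z\in\mathcal{V}_h^i\cup\mathcal{M}_h^i\}$. $V_{nc}$ is the Crouzeix–Raviart space (piecewise affine functions continuous at interior edge midpoints and vanishing at boundary edge midpoints). For $v\in V_{nc}$, $\Pi_hv:=\sum_{z\in\mathcal{M}_h^i}v(z)\psi_z$. Let $a(v,w)=(\nabla v,\nabla w)$. Let $\mathcal{K}_h=\{v_h\in V_h: v_h(z)\ge\chi(z)\ \forall z\in\mathcal{M}_h\}$ and $u_h\in\mathcal{K}_h$ the solution of $a(u_h,v_h-u_h)\ge(f,v_h-u_h)$ for all $v_h\in\mathcal{K}_h$. With $\langle w,v\rangle_h=\sum_{T}\frac{|T|}{3}\sum_{z\in\mathcal{M}_T}w(z)v(z)$,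 $\sigma_h\in V_{nc}$ is defined by $\langle\sigma_h,v_h\rangle_h=(f,\Pi_hv_h)-a(u_h,\Pi_hv_h)$ for all $v_h\in V_{nc}$. For $v\in L^2(\Omega)$, $\bar v$ is the piecewise constant function with $\bar v|_T=\frac1{|T|}\int_Tv\,dx$. $\mathbb{N}_h=\{T\in\mathcal{T}_h: u_h(z)>\chi(z)\ \forall z\in\mathcal{M}_T\}$. *)

(* Defs.v *)
From HB Require Import structures.
From mathcomp Require Import all_boot all_order all_algebra.
From mathcomp Require Import all_classical all_reals all_analysis.
Set Implicit Arguments.
Unset Strict Implicit.
Unset Printing Implicit Defensive.
Import Order.TTheory GRing.Theory Num.Theory.
Import numFieldNormedType.Exports.
Local Open Scope classical_set_scope.
Local Open Scope ring_scope.

Section P2FEM.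
Variable R : realType.

Definition pt := (R * R)%type.
Definition tri := (pt * pt * pt)%type.

Definition tv1 (T : tri) : pt := T.1.1.
Definition tv2 (T : tri) : pt := T.1.2.
Definition tv3 (T : tri) : pt := T.2.
Definition vertices (T : tri) : seq pt := [:: tv1 T; tv2 T; tv3 T].

(** twice the signed area *)
Definition det2 (a b c : pt) : R :=
  (b.1 - a.1) * (c.2 - a.2) - (b.2 - a.2) * (c.1 - a.1).
Definition nondegenerate (T : tri) : Prop := det2 (tv1 T) (tv2 T) (tv3 T) != 0.
Definition area (T : tri) : R := `|det2 (tv1 T) (tv2 T) (tv3 T)| / 2.

Definition tri_set (T : tri) : set pt :=
  [set x | exists l1 l2 l3 : R, [/\ 0 <= l1, 0 <= l2, 0 <= l3, l1 + l2 + l3 = 1 &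
     x = (l1 * (tv1 T).1 + l2 * (tv2 T).1 + l3 * (tv3 T).1,
          l1 * (tv1 T).2 + l2 * (tv2 T).2 + l3 * (tv3 T).2)]].

Definition segment (a b : pt) : set pt :=
  [set x | exists l : R, [/\ 0 <= l, l <= 1 &
     x = ((1 - l) * a.1 + l * b.1, (1 - l) * a.2 + l * b.2)]].

Definition midpt (a b : pt) : pt := ((a.1 + b.1) / 2, (a.2 + b.2) / 2).
Definition midpoints (T : tri) : seq pt :=
  [:: midpt (tv2 T) (tv3 T); midpt (tv3 T) (tv1 T); midpt (tv1 T) (tv2 T)].

Definition conforming (Om : set pt) (n : nat) (Th : 'I_n -> tri) : Prop :=
  [/\ forall i, nondegenerate (Th i),
      closure Om = \bigcup_i tri_set (Th i) &
      forall i j, i != j ->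
        let S := tri_set (Th i) `&` tri_set (Th j) in
        [\/ S = set0,
            (exists v, [/\ v \in vertices (Th i), v \in vertices (Th j) & S = [set v]])
          | (exists v w, [/\ v != w, (v \in vertices (Th i)) && (w \in vertices (Th i)),
                            (v \in vertices (Th j)) && (w \in vertices (Th j)) &
                            S = segment v w])]].

(** bounded polygonal domain: open and connected (boundedness and the polygonal
    boundary follow from [conforming]) *)
Definition domain (Om : set pt) : Prop := open Om /\ connected Om.

Definition Mh n (Th : 'I_n -> tri) : set pt := [set z | exists i, z \in midpoints (Th i)].
Definition Mhi (Om : set pt) n (Th : 'I_n -> tri) : set pt := Mh Th `&` Om.
Definition Vhi (Om : set pt) n (Th : 'I_n -> tri) : set pt :=
  [set z | exists i, z \in vertices (Th i)] `&` Om.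
Definition node (Om : set pt) n (Th : 'I_n -> tri) : set pt := Vhi Om Th `|` Mhi Om Th.

Definition Mhi_list (Om : set pt) n (Th : 'I_n -> tri) : seq pt :=
  [seq z <- undup (flatten [seq midpoints (Th i) | i <- enum 'I_n]) | `[< Om z >]].

Definition isP2 (p : pt -> R) : Prop :=
  exists c0 c1 c2 c3 c4 c5 : R, forall x : pt,
    p x = c0 + c1 * x.1 + c2 * x.2 + c3 * x.1 ^+ 2 + c4 * (x.1 * x.2) + c5 * x.2 ^+ 2.
Definition isP1 (p : pt -> R) : Prop :=
  exists c0 c1 c2 : R, forall x : pt, p x = c0 + c1 * x.1 + c2 * x.2.

(** V_h : continuous piecewise P2 functions vanishing on the boundary; elements
    are represented by their extension by zero outside Om. *)
Definition Vh (Om : set pt) n (Th : 'I_n -> tri) (v : pt -> R) : Prop :=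
  [/\ continuous v,
      forall i, exists p, isP2 p /\ {in tri_set (Th i), v =1 p} &
      forall x, ~ Om x -> v x = 0].

(** V_nc : Crouzeix-Raviart functions, represented by their affine pieces *)
Definition Vnc (Om : set pt) n (Th : 'I_n -> tri) (w : 'I_n -> pt -> R) : Prop :=
  [/\ forall i, isP1 (w i),
      forall i j z, z \in midpoints (Th i) -> z \in midpoints (Th j) -> Om z ->
        w i z = w j z &
      forall i z, z \in midpoints (Th i) -> ~ Om z -> w i z = 0].

Definition ncval n (Th : 'I_n -> tri) (w : 'I_n -> pt -> R) (z : pt) : R :=
  if [pick i | z \in midpoints (Th i)] is Some i then w i z else 0.

Definition Pih (Om : set pt) n (Th : 'I_n -> tri) (psi : pt -> pt -> R)
  (w : 'I_n -> pt -> R) : pt -> R :=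
  fun x => \sum_(z <- Mhi_list Om Th) ncval Th w z * psi z x.

Definition ip_h n (Th : 'I_n -> tri) (w v : 'I_n -> pt -> R) : R :=
  \sum_(i < n) area (Th i) / 3 * \sum_(z <- midpoints (Th i)) w i z * v i z.

Definition leb2 := ((@lebesgue_measure R) \x (@lebesgue_measure R))%E.

Definition pdx (g : pt -> R) : pt -> R := fun x => derive1 (fun t => g (t, x.2)) x.1.
Definition pdy (g : pt -> R) : pt -> R := fun x => derive1 (fun t => g (x.1, t)) x.2.
Definition pd (b : bool) (g : pt -> R) : pt -> R := if b then pdx g else pdy g.
Definition iter_pd (s : seq bool) (g : pt -> R) : pt -> R := foldr pd g s.

Definition a_form (Om : set pt) (v w : pt -> R) : R :=
  \int[leb2]_(x in Om) (pdx v x * pdx w x + pdy v x * pdy w x).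
Definition l2ip (Om : set pt) (g v : pt -> R) : R :=
  \int[leb2]_(x in Om) (g x * v x).

Definition L2 (Om : set pt) (g : pt -> R) : Prop :=
  measurable_fun Om g /\ leb2.-integrable Om (fun x => ((g x) ^+ 2)%:E).

Definition smooth (g : pt -> R) : Prop :=
  forall s : seq bool, continuous (iter_pd s g) /\
    forall x : pt, derivable (fun t => iter_pd s g (t, x.2)) x.1 1 /\
                   derivable (fun t => iter_pd s g (x.1, t)) x.2 1.
Definition test_fun (Om : set pt) (phi : pt -> R) : Prop :=
  smooth phi /\ exists K : set pt, [/\ compact K, K `<=` Om & forall x, ~ K x -> phi x = 0].

Definition H1 (Om : set pt) (g : pt -> R) : Prop :=
  L2 Om g /\ exists g1 g2 : pt -> R, [/\ L2 Om g1, L2 Om g2 &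
    forall phi, test_fun Om phi ->
      l2ip Om g (pdx phi) = - l2ip Om g1 phi /\ l2ip Om g (pdy phi) = - l2ip Om g2 phi].

Definition Kh (Om : set pt) n (Th : 'I_n -> tri) (chi : pt -> R) (v : pt -> R) : Prop :=
  Vh Om Th v /\ forall z, Mh Th z -> chi z <= v z.

Definition elem_mean n (Th : 'I_n -> tri) (w : 'I_n -> pt -> R) (i : 'I_n) : R :=
  (area (Th i))^-1 * \int[leb2]_(x in tri_set (Th i)) w i x.

Definition inNh n (Th : 'I_n -> tri) (u chi : pt -> R) (i : 'I_n) : Prop :=
  forall z, z \in midpoints (Th i) -> chi z < u z.

End P2FEM.

(* Main.v *)
Require Import Defs.
From HB Require Import structures.
From mathcomp Require Import all_boot all_order all_algebra.
From mathcomp Require Import all_classical all_reals all_analysis.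
From mathcomp Require Import lra ring measurable_realfun.
Import Order.TTheory GRing.Theory Num.Theory.
Import numFieldNormedType.Exports.
Local Open Scope classical_set_scope.
Local Open Scope ring_scope.

Set Implicit Arguments. Unset Strict Implicit. Unset Printing Implicit Defensive.


Section S.
Variable R : realType.
Local Notation leb := (@lebesgue_measure R).

Lemma meas_refl1 (a : R) : measurable_fun [set: measurableTypeR R] (fun x : R => a - x).
Proof. by apply: measurable_funB. Qed.

Lemma leb_refl (a : R) (A : set R) : measurable A ->
  pushforward leb ((fun x : R => a - x) : _ -> measurableTypeR R) A = leb A.
Proof.
move=> mA; apply/esym/lebesgue_measure_unique => //; first exact: meas_refl1.
move=> mf X [[b c]] _ <-.
change (leb `]b, c]%classic = leb ((fun x : R => a - x) @^-1` `]b, c]%classic)).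
have -> : (fun x : R => a - x) @^-1` `]b, c]%classic = `[a - c, a - b[%classic.
  apply/seteqP; split => x /=; rewrite !in_itv /= => /andP[h1 h2]; apply/andP; split; lra.
rewrite !lebesgue_measure_itv /= !lte_fin.
have [bc|cb] := ltP b c.
  by rewrite ifT ?ifT //; [congr (_%:E); lra | lra].
by rewrite ifF ?ifF //; apply/negbTE; rewrite -leNgt; lra.
Qed.
End S.
Section S2.
Variable R : realType.
Local Notation leb := (@lebesgue_measure R).
Local Notation P := (measurableTypeR R * measurableTypeR R)%type.
Definition rho (p x : P) : P := (p.1 - x.1, p.2 - x.2).

Lemma meas_rho p : measurable_fun [set: P] (rho p).
Proof.
apply: measurable_fun_pair.
  apply: measurable_funB => //; exact: measurable_fst.
apply: measurable_funB => //; exact: measurable_snd.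
Qed.

Lemma leb2_refl p (X : set P) : measurable X ->
  pushforward (@leb2 R) (rho p) X = leb2 X.
Proof.
move=> mX.
apply/esym/product_measure_unique => //; first exact: meas_rho.
move=> mf A B mA mB.
change (((leb \x leb)%E (rho p @^-1` (A `*` B))) = leb A * leb B)%E.
have -> : rho p @^-1` (A `*` B) = ((fun x : R => p.1 - x) @^-1` A) `*` ((fun x : R => p.2 - x) @^-1` B).
  by apply/seteqP; split => -[x y].
rewrite product_measure1E.
- by rewrite -(leb_refl p.1 mA) -(leb_refl p.2 mB).
- by rewrite -[X in measurable X]setTI; apply: meas_refl1.
- by rewrite -[X in measurable X]setTI; apply: meas_refl1.
Qed.
End S2.



Section S3.
Variable R : realType.
Local Notation leb := (@lebesgue_measure R).
Local Notation P := (measurableTypeR R * measurableTypeR R)%type.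

Lemma Rint_refl p (D : set P) (f : P -> R) : measurable D ->
  measurable_fun setT f ->
  (@leb2 R).-integrable (rho p @^-1` D) (EFin \o (f \o rho p)) ->
  Rintegral (@leb2 R) D f = Rintegral (@leb2 R) (rho p @^-1` D) (f \o rho p).
Proof.
move=> mD mf intf; rewrite /Rintegral; congr fine.
have mfE : measurable_fun setT (EFin \o f) by exact/measurable_EFinP.
have E := @integral_pushforward _ _ _ _ R (rho p) (meas_rho p) (@leb2 R) D (EFin \o f) mfE intf mD.
transitivity (\int[pushforward (@leb2 R) (rho p)]_(y in D) (EFin \o f) y)%E; last exact: E.
apply: eq_measure_integral; first exact: meas_rho. move=> mr B mB _.
change (leb2 B = pushforward (@leb2 R) (rho p) B).
by rewrite leb2_refl.
Qed.

Lemma aff_meas (al be ga : R) :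
  measurable_fun [set: P] (fun x : P => al + be * x.1 + ga * x.2).
Proof.
apply: measurable_funD; [apply: measurable_funD|].
- exact: measurable_cst.
- apply: measurable_funM; [exact: measurable_cst | exact: measurable_fst].
- apply: measurable_funM; [exact: measurable_cst | exact: measurable_snd].
Qed.

Lemma mset_le (h : P -> R) (r : R) : measurable_fun setT h ->
  measurable [set x | r <= h x].
Proof.
move=> mh; have := mh measurableT _ (measurable_itv `[r, +oo[).
rewrite setTI; congr measurable; apply/seteqP; split => x /=;
  by rewrite in_itv /= andbT.
Qed.

Lemma mset_lt (h : P -> R) (r : R) : measurable_fun setT h ->
  measurable [set x | r < h x].
Proof.
move=> mh; have := mh measurableT _ (measurable_itv `]r, +oo[).
rewrite setTI; congr measurable; apply/seteqP; split => x /=;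
  by rewrite in_itv /= andbT.
Qed.

End S3.


Section Geo.
Variable R : realType.
Implicit Types (T : tri R) (x : pt R).

Definition triD T := det2 (tv1 T) (tv2 T) (tv3 T).
Definition lam1 T x := det2 x (tv2 T) (tv3 T) / triD T.
Definition lam2 T x := det2 (tv1 T) x (tv3 T) / triD T.
Definition lam3 T x := det2 (tv1 T) (tv2 T) x / triD T.

Lemma lam_sum T x : Defs.nondegenerate T -> lam1 T x + lam2 T x + lam3 T x = 1.
Proof.
rewrite /Defs.nondegenerate /lam1 /lam2 /lam3 /triD => nd.
move: nd; case: T => [[[a1 a2] [b1 b2]] [c1 c2]]; case: x => x1 x2.
rewrite /det2 /tv1 /tv2 /tv3 /= => nd.
by field.
Qed.

Lemma lam_comb1 T x : Defs.nondegenerate T ->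
  x.1 = lam1 T x * (tv1 T).1 + lam2 T x * (tv2 T).1 + lam3 T x * (tv3 T).1.
Proof.
rewrite /Defs.nondegenerate /lam1 /lam2 /lam3 /triD => nd.
move: nd; case: T => [[[a1 a2] [b1 b2]] [c1 c2]]; case: x => x1 x2.
rewrite /det2 /tv1 /tv2 /tv3 /= => nd.
by field.
Qed.

Lemma lam_comb2 T x : Defs.nondegenerate T ->
  x.2 = lam1 T x * (tv1 T).2 + lam2 T x * (tv2 T).2 + lam3 T x * (tv3 T).2.
Proof.
rewrite /Defs.nondegenerate /lam1 /lam2 /lam3 /triD => nd.
move: nd; case: T => [[[a1 a2] [b1 b2]] [c1 c2]]; case: x => x1 x2.
rewrite /det2 /tv1 /tv2 /tv3 /= => nd.
by field.
Qed.

Lemma lam_of_comb T (l1 l2 l3 : R) : Defs.nondegenerate T -> l1 + l2 + l3 = 1 ->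
  let x := (l1 * (tv1 T).1 + l2 * (tv2 T).1 + l3 * (tv3 T).1,
          l1 * (tv1 T).2 + l2 * (tv2 T).2 + l3 * (tv3 T).2) in
  [/\ lam1 T x = l1, lam2 T x = l2 & lam3 T x = l3].
Proof.
rewrite /Defs.nondegenerate /lam1 /lam2 /lam3 /triD => nd s.
have -> : l3 = 1 - l1 - l2 by rewrite -s; ring.
move: nd; case: T => [[[a1 a2] [b1 b2]] [c1 c2]].
rewrite /det2 /tv1 /tv2 /tv3 /= => nd.
by split; field.
Qed.

Lemma tri_setE T x : Defs.nondegenerate T ->
  tri_set T x <-> [/\ 0 <= lam1 T x, 0 <= lam2 T x & 0 <= lam3 T x].
Proof.
move=> nd; split.
  case=> l1 [l2 [l3 [h1 h2 h3 hs ->]]].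
  by have [-> -> ->] := lam_of_comb nd hs.
case=> h1 h2 h3; exists (lam1 T x), (lam2 T x), (lam3 T x); split => //.
  exact: lam_sum.
by rewrite -lam_comb1 // -lam_comb2 //; case: x {h1 h2 h3}.
Qed.

End Geo.


Section Int.
Variable R : realType.
Local Notation leb := (@lebesgue_measure R).
Local Notation P := (measurableTypeR R * measurableTypeR R)%type.
Implicit Types (T : tri R).

Lemma isP1_meas (h : pt R -> R) : isP1 h -> measurable_fun [set: P] h.
Proof.
case=> al [be [ga e]].
have -> : h = (fun x => al + be * x.1 + ga * x.2) by apply/funext => x; exact: e.
exact: aff_meas.
Qed.

Lemma isP1_cst (k : R) : isP1 (fun _ : pt R => k).
Proof. by exists k, 0, 0 => x; ring. Qed.

Lemma isP1_add (f g : pt R -> R) : isP1 f -> isP1 g -> isP1 (fun x => f x + g x).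
Proof.
case=> a0 [a1 [a2 ea]] [b0 [b1 [b2 eb]]].
by exists (a0 + b0), (a1 + b1), (a2 + b2) => x; rewrite ea eb; ring.
Qed.

Lemma isP1_scale (k : R) (f : pt R -> R) : isP1 f -> isP1 (fun x => k * f x).
Proof.
case=> a0 [a1 [a2 ea]].
by exists (k * a0), (k * a1), (k * a2) => x; rewrite ea; ring.
Qed.

Lemma isP1_det1 (b c : pt R) : isP1 (fun x => det2 x b c).
Proof.
exists (b.1 * c.2 - b.2 * c.1), (b.2 - c.2), (c.1 - b.1) => x; rewrite /det2; ring.
Qed.
Lemma isP1_det2 (a c : pt R) : isP1 (fun x => det2 a x c).
Proof.
exists (a.2 * c.1 - a.1 * c.2), (c.2 - a.2), (a.1 - c.1) => x; rewrite /det2; ring.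
Qed.
Lemma isP1_det3 (a b : pt R) : isP1 (fun x => det2 a b x).
Proof.
exists (a.1 * b.2 - a.2 * b.1), (a.2 - b.2), (b.1 - a.1) => x; rewrite /det2; ring.
Qed.

Lemma isP1_lam1 T : isP1 (lam1 T).
Proof.
have [a0 [a1 [a2 e]]] := isP1_det1 (tv2 T) (tv3 T).
exists (a0 / triD T), (a1 / triD T), (a2 / triD T) => x.
by rewrite /lam1 e; ring.
Qed.
Lemma isP1_lam2 T : isP1 (lam2 T).
Proof.
have [a0 [a1 [a2 e]]] := isP1_det2 (tv1 T) (tv3 T).
exists (a0 / triD T), (a1 / triD T), (a2 / triD T) => x.
by rewrite /lam2 e; ring.
Qed.
Lemma isP1_lam3 T : isP1 (lam3 T).
Proof.
have [a0 [a1 [a2 e]]] := isP1_det3 (tv1 T) (tv2 T).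
exists (a0 / triD T), (a1 / triD T), (a2 / triD T) => x.
by rewrite /lam3 e; ring.
Qed.

Lemma meas_tri T : Defs.nondegenerate T -> measurable (tri_set T : set P).
Proof.
move=> nd.
have -> : (tri_set T : set P) = [set x : P | 0 <= lam1 T x] `&` [set x : P | 0 <= lam2 T x]
   `&` [set x : P | 0 <= lam3 T x].
  apply/seteqP; split => x /=.
    by move/(tri_setE x nd) => [h1 h2 h3].
  by move=> [[h1 h2] h3]; apply/(tri_setE x nd).
apply: measurableI; [apply: measurableI|];
  apply: mset_le; apply: isP1_meas; [exact: isP1_lam1|exact: isP1_lam2|exact: isP1_lam3].
Qed.

Lemma isP1_comb (h : pt R -> R) (a b c : pt R) (l1 l2 l3 : R) : isP1 h ->
  l1 + l2 + l3 = 1 ->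
  h (l1 * a.1 + l2 * b.1 + l3 * c.1, l1 * a.2 + l2 * b.2 + l3 * c.2) =
  l1 * h a + l2 * h b + l3 * h c.
Proof.
case=> a0 [a1 [a2 e]] s; rewrite !e /=.
have -> : l3 = 1 - l1 - l2 by rewrite -s; ring.
ring.
Qed.

Lemma tri_bound T (h : pt R -> R) x : isP1 h -> tri_set T x ->
  `|h x| <= `|h (tv1 T)| + `|h (tv2 T)| + `|h (tv3 T)|.
Proof.
move=> hP [l1 [l2 [l3 [h1 h2 h3 s ->]]]].
rewrite (isP1_comb _ _ _ hP s).
set A := h (tv1 T); set B := h (tv2 T); set C := h (tv3 T).
have l1le : l1 <= 1 by lra.
have l2le : l2 <= 1 by lra.
have l3le : l3 <= 1 by lra.
have nA := normr_ge0 A; have nB := normr_ge0 B; have nC := normr_ge0 C.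
apply: (le_trans (ler_normD _ _)).
apply: lerD; last by rewrite normrM ger0_norm //; nra.
apply: (le_trans (ler_normD _ _)).
apply: lerD; by rewrite normrM ger0_norm //; nra.
Qed.


Lemma isP1_fst : isP1 (fun x : pt R => x.1).
Proof. by exists 0, 1, 0 => x; ring. Qed.
Lemma isP1_snd : isP1 (fun x : pt R => x.2).
Proof. by exists 0, 0, 1 => x; ring. Qed.

Lemma tri_fin T : Defs.nondegenerate T -> (@leb2 R (tri_set T : set P) < +oo)%E.
Proof.
move=> nd.
set Kx := `|(tv1 T).1| + `|(tv2 T).1| + `|(tv3 T).1|.
set Ky := `|(tv1 T).2| + `|(tv2 T).2| + `|(tv3 T).2|.
have sub : (tri_set T : set P) `<=` `[- Kx, Kx] `*` `[- Ky, Ky].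
  move=> x Tx; split => /=; rewrite in_itv /= -ler_norml.
    exact: (tri_bound isP1_fst Tx).
  exact: (tri_bound isP1_snd Tx).
apply: (@le_lt_trans _ _ (@leb2 R (`[- Kx, Kx] `*` `[- Ky, Ky]))).
  apply: le_measure => //; rewrite inE; first exact: meas_tri.
  by apply: measurableX; exact: measurable_itv.
rewrite /leb2 product_measure1E; try exact: measurable_itv.
change ((leb `[(- Kx)%R, Kx] * leb `[(- Ky)%R, Ky]) < +oo)%E.
by rewrite !lebesgue_measure_itv /=; case: ifP => _; case: ifP => _; rewrite ?mul0e ?mule0 -?EFinM ?ltry.
Qed.

Lemma int_tri T (h : pt R -> R) (S : set P) : Defs.nondegenerate T -> isP1 h ->
  measurable S -> S `<=` tri_set T -> (@leb2 R).-integrable S (EFin \o h).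
Proof.
move=> nd hP mS sub.
apply: (integrableS (meas_tri nd)) => //.
apply/integrableP; split.
  apply/measurable_EFinP; apply: measurable_funS (isP1_meas hP) => //.
set M := `|h (tv1 T)| + `|h (tv2 T)| + `|h (tv3 T)|.
apply: (@le_lt_trans _ _ (M%:E * @leb2 R (tri_set T : set P))%E).
  apply: integral_le_bound => //.
  - exact: meas_tri.
  - apply/measurable_EFinP; apply: measurable_funS (isP1_meas hP) => //.
  - by rewrite lee_fin /M; apply: addr_ge0; [apply: addr_ge0|]; exact: normr_ge0.
  - by apply: aeW => x Tx /=; rewrite lee_fin; exact: tri_bound.
by apply: lte_mul_pinfty => //; [rewrite lee_fin /M; apply: addr_ge0; [apply: addr_ge0|]; exact: normr_ge0| exact: tri_fin].
Qed.

End Int.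


Section Core.
Variable R : realType.
Local Notation P := (measurableTypeR R * measurableTypeR R)%type.
Implicit Types (T : tri R).

Definition pT T : pt R := ((2 * (tv1 T).1 + (tv2 T).1 + (tv3 T).1) / 2,
                        (2 * (tv1 T).2 + (tv2 T).2 + (tv3 T).2) / 2).

Lemma rho_lam T (x : pt R) : Defs.nondegenerate T ->
  let y := ((pT T).1 - x.1, (pT T).2 - x.2) in
  [/\ lam1 T y = 1 - lam1 T x,
      lam2 T y = 1/2 - lam2 T x &
      lam3 T y = 1/2 - lam3 T x].
Proof.
rewrite /Defs.nondegenerate /lam1 /lam2 /lam3 /triD /pT.
case: T => [[[a1 a2] [b1 b2]] [c1 c2]]; case: x => x1 x2.
rewrite /det2 /tv1 /tv2 /tv3 /= => nd.
by split; field.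
Qed.

Lemma mset_ge (h : P -> R) (r : R) : measurable_fun setT h ->
  measurable [set x | h x <= r].
Proof.
move=> mh; have := mh measurableT _ (measurable_itv `]-oo, r]).
rewrite setTI; congr measurable; apply/seteqP; split => x /=;
  by rewrite in_itv /=.
Qed.

Lemma isP1_phi (f : pt R -> R) : isP1 f -> isP1 (fun x => 1 - 2 * f x).
Proof.
case=> a0 [a1 [a2 e]].
by exists (1 - 2 * a0), (- 2 * a1), (- 2 * a2) => x; rewrite e; ring.
Qed.

Lemma core T : Defs.nondegenerate T ->
  0 <= Rintegral (@leb2 R) (tri_set T : set P) (fun x => 1 - 2 * lam1 T x).
Proof.
move=> nd.
set S : set P := tri_set T.
set phi := fun x : P => 1 - 2 * lam1 T x.
have phiP : isP1 phi by apply: isP1_phi; exact: isP1_lam1.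
have mS : measurable S by exact: meas_tri.
have ml : measurable_fun setT (lam1 T : P -> R) by apply: isP1_meas; exact: isP1_lam1.
set E := S `&` [set x | lam1 T x <= 1/2].
set C := S `&` [set x | 1/2 < lam1 T x].
have mE : measurable E by apply: measurableI => //; exact: mset_ge.
have mC : measurable C by apply: measurableI => //; exact: mset_lt.
have SEC : S = E `|` C.
  apply/seteqP; split => x /=.
    by move=> Sx; case: (leP (lam1 T x) (1/2)) => h; [left|right].
  by case=> -[].
have dEC : [disjoint E & C].
  apply/disj_setPS => x [[_ h1] [_ h2]]; move: h1 h2 => /= h1 h2; exfalso; clear -h1 h2; lra.
set p := pT T.
set B := rho p @^-1` C.
have mB : measurable B.
  by have := meas_rho p measurableT mC; rewrite setTI.
have BE : B `<=` E.
  move=> x [Cx1 Cx2]; move: Cx1 Cx2.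
  rewrite /S => /(tri_setE _ nd) [h1 h2 h3] /= h4.
  have [e1 e2 e3] := rho_lam x nd.
  have s := lam_sum x nd.
  have k1 : 0 <= 1 - lam1 T x by rewrite -e1; exact: h1.
  have k2 : 0 <= 1/2 - lam2 T x by rewrite -e2; exact: h2.
  have k3 : 0 <= 1/2 - lam3 T x by rewrite -e3; exact: h3.
  have k4 : 1/2 < 1 - lam1 T x by rewrite -e1; exact: h4.
  split; last by rewrite /=; clear -k1 k2 k3 k4 s; lra.
  apply/(tri_setE _ nd); split; clear -k1 k2 k3 k4 s; lra.
have intS : forall (U : set P) (g : pt R -> R), measurable U -> U `<=` S -> isP1 g ->
    (@leb2 R).-integrable U (EFin \o g).
  by move=> U g mU US gP; exact: (int_tri nd gP mU US).
have EB : E = B `|` (E `\` B).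
  apply/seteqP; split => x /=.
    by move=> Ex; case: (pselect (B x)) => h; [left|right].
  by case=> [/BE|[]].
have dB : [disjoint B & E `\` B].
  by apply/disj_setPS => x [h1 [_ h2]].
have h1 : Rintegral (@leb2 R) S phi =
    Rintegral (@leb2 R) E phi + Rintegral (@leb2 R) C phi.
  rewrite {1}SEC Rintegral_setU //; rewrite -SEC; exact: intS.
have h2 : Rintegral (@leb2 R) C phi = - Rintegral (@leb2 R) B phi.
  rewrite (Rint_refl (p := p)) //; last 2 first.
  - exact: isP1_meas.
  - apply: (eq_integrable mB (EFin \o (fun x => -1 * phi x))).
      move=> x _ /=; congr (_%:E).
      have [e1 _ _] := rho_lam x nd.
      by rewrite /phi e1; ring.
    apply: intS => //; first by move=> x /BE [].
    exact: isP1_scale.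
  have -> : Rintegral (@leb2 R) B (phi \o rho p) = Rintegral (@leb2 R) B (fun x => -1 * phi x).
    apply: eq_Rintegral => x _ /=.
    have [e1 _ _] := rho_lam x nd.
    by rewrite /phi e1; ring.
  rewrite RintegralZl //; first by ring.
  by apply: intS => // x /BE [].
have h3 : Rintegral (@leb2 R) E phi =
    Rintegral (@leb2 R) B phi + Rintegral (@leb2 R) (E `\` B) phi.
  rewrite {1}EB Rintegral_setU //.
  - exact: measurableD.
  - by rewrite -EB; apply: intS => // x [].
rewrite -/phi h1 h2 h3.
have -> : Rintegral (@leb2 R) B phi + Rintegral (@leb2 R) (E `\` B) phi -
   Rintegral (@leb2 R) B phi = Rintegral (@leb2 R) (E `\` B) phi by ring.
apply: Rintegral_ge0 => x [[_ hx] _] /=.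
move: hx => /= hx; rewrite /phi; clear -hx; lra.
Qed.

End Core.


Section Mean.
Variable R : realType.
Local Notation P := (measurableTypeR R * measurableTypeR R)%type.
Implicit Types (T : tri R).

Definition rotT T : tri R := ((tv2 T, tv3 T), tv1 T).

Lemma rot_nd T : Defs.nondegenerate T -> Defs.nondegenerate (rotT T).
Proof.
rewrite /Defs.nondegenerate /rotT /tv1 /tv2 /tv3 /=.
have -> : det2 T.1.2 T.2 T.1.1 = det2 T.1.1 T.1.2 T.2 by rewrite /det2; ring.
by [].
Qed.

Lemma rot_set T : tri_set (rotT T) = tri_set T.
Proof.
apply/seteqP; split => x [l1 [l2 [l3 [h1 h2 h3 s ->]]]].
  exists l3, l1, l2; split => //; first by rewrite -s; ring.
  by rewrite /rotT /tv1 /tv2 /tv3 /=; congr pair; ring.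
exists l2, l3, l1; split => //; first by rewrite -s; ring.
by rewrite /rotT /tv1 /tv2 /tv3 /=; congr pair; ring.
Qed.

Lemma rot_lam T x : lam1 (rotT T) x = lam2 T x.
Proof.
rewrite /lam1 /lam2 /triD /rotT /tv1 /tv2 /tv3 /=.
have -> : det2 T.1.2 T.2 T.1.1 = det2 T.1.1 T.1.2 T.2 by rewrite /det2; ring.
by congr (_ / _); rewrite /det2; ring.
Qed.

Lemma rot_lam2 T x : lam1 (rotT (rotT T)) x = lam3 T x.
Proof.
rewrite rot_lam /lam2 /lam3 /triD /rotT /tv1 /tv2 /tv3 /=.
have -> : det2 T.1.2 T.2 T.1.1 = det2 T.1.1 T.1.2 T.2 by rewrite /det2; ring.
by congr (_ / _); rewrite /det2; ring.
Qed.

Definition phik (l : pt R -> R) := fun x : pt R => 1 - 2 * l x.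

Lemma core2 T : Defs.nondegenerate T ->
  0 <= Rintegral (@leb2 R) (tri_set T : set P) (phik (lam2 T)).
Proof.
move=> nd; have := core (rot_nd nd); rewrite rot_set.
by under eq_Rintegral do rewrite rot_lam.
Qed.

Lemma core3 T : Defs.nondegenerate T ->
  0 <= Rintegral (@leb2 R) (tri_set T : set P) (phik (lam3 T)).
Proof.
move=> nd; have := core (rot_nd (rot_nd nd)); rewrite !rot_set.
by under eq_Rintegral do rewrite rot_lam2.
Qed.

Lemma aff_interp T (w : pt R -> R) x : Defs.nondegenerate T -> isP1 w ->
  w x = w (midpt (tv2 T) (tv3 T)) * phik (lam1 T) x
      + w (midpt (tv3 T) (tv1 T)) * phik (lam2 T) x
      + w (midpt (tv1 T) (tv2 T)) * phik (lam3 T) x.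
Proof.
move=> nd [c0 [c1 [c2 e]]]; rewrite !e.
move: nd; rewrite /Defs.nondegenerate /phik /lam1 /lam2 /lam3 /triD /midpt.
case: T => [[[a1 a2] [b1 b2]] [d1 d2]]; case: x => x1 x2.
rewrite /det2 /tv1 /tv2 /tv3 /= => nd.
by field.
Qed.


Lemma isP1_phik (l : pt R -> R) : isP1 l -> isP1 (phik l).
Proof. exact: isP1_phi. Qed.

Lemma mean_le0 T (w : pt R -> R) : Defs.nondegenerate T -> isP1 w ->
  (forall m, m \in midpoints T -> w m <= 0) ->
  Rintegral (@leb2 R) (tri_set T : set P) w <= 0.
Proof.
move=> nd wP wle.
set A := w (midpt (tv2 T) (tv3 T)).
set B := w (midpt (tv3 T) (tv1 T)).
set C := w (midpt (tv1 T) (tv2 T)).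
have hA : A <= 0 by apply: wle; rewrite /midpoints inE eqxx.
have hB : B <= 0 by apply: wle; rewrite /midpoints !inE eqxx orbT.
have hC : C <= 0 by apply: wle; rewrite /midpoints !inE eqxx !orbT.
have mS := meas_tri nd.
have i1 := int_tri nd (isP1_phik (isP1_lam1 T)) mS (@subset_refl _ _).
have i2 := int_tri nd (isP1_phik (isP1_lam2 T)) mS (@subset_refl _ _).
have i3 := int_tri nd (isP1_phik (isP1_lam3 T)) mS (@subset_refl _ _).
have iZ : forall (k : R) l, isP1 l -> (@leb2 R).-integrable (tri_set T : set P) (EFin \o (fun x => k * phik l x)).
  move=> k l lP; apply: (int_tri nd _ mS (@subset_refl _ _)).
  by apply: isP1_scale; exact: isP1_phik.
under eq_Rintegral => x _ do rewrite (aff_interp x nd wP).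
rewrite -/A -/B -/C.
rewrite RintegralD //; last exact: iZ (isP1_lam3 T).
  rewrite RintegralD //; [|exact: iZ (isP1_lam1 T)|exact: iZ (isP1_lam2 T)].
  rewrite !RintegralZl //.
  have g1 : 0 <= Rintegral (@leb2 R) (tri_set T : set P) (fun x => phik (lam1 T) x) := core nd.
  have g2 : 0 <= Rintegral (@leb2 R) (tri_set T : set P) (fun x => phik (lam2 T) x) := core2 nd.
  have g3 : 0 <= Rintegral (@leb2 R) (tri_set T : set P) (fun x => phik (lam3 T) x) := core3 nd.
  set I1 := (X in A * X + _ + _ <= 0).
  set I2 := (X in _ + B * X + _ <= 0).
  set I3 := (X in _ + _ + C * X <= 0).
  have e1 : I1 = Rintegral (@leb2 R) (tri_set T : set P) (fun x => phik (lam1 T) x) by [].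
  have e2 : I2 = Rintegral (@leb2 R) (tri_set T : set P) (fun x => phik (lam2 T) x) by [].
  have e3 : I3 = Rintegral (@leb2 R) (tri_set T : set P) (fun x => phik (lam3 T) x) by [].
  rewrite -e1 in g1; rewrite -e2 in g2; rewrite -e3 in g3.
  clear -hA hB hC g1 g2 g3; nra.
apply: (int_tri nd _ mS (@subset_refl _ _)).
by apply: isP1_add; apply: isP1_scale; apply: isP1_phik; [exact: isP1_lam1|exact: isP1_lam2].
Qed.

Lemma mean_zero T (w : pt R -> R) : Defs.nondegenerate T -> isP1 w ->
  (forall m, m \in midpoints T -> w m = 0) ->
  Rintegral (@leb2 R) (tri_set T : set P) w = 0.
Proof.
move=> nd wP w0.
transitivity (Rintegral (@leb2 R) (tri_set T : set P) (fun _ => 0)).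
  apply: eq_Rintegral => x _; rewrite (aff_interp x nd wP) !w0 ?mul0r ?addr0 //;
  by rewrite /midpoints !inE eqxx ?orbT.
by rewrite Rintegral_cst ?mul0r //; exact: meas_tri.
Qed.

End Mean.


Section Mid.
Variable R : realType.
Implicit Types (T : tri R).

Local Notation m1 T := (midpt (tv2 T) (tv3 T)).
Local Notation m2 T := (midpt (tv3 T) (tv1 T)).
Local Notation m3 T := (midpt (tv1 T) (tv2 T)).

Lemma phik_mid T : Defs.nondegenerate T ->
  [/\ phik (lam1 T) (m1 T) = 1, phik (lam1 T) (m2 T) = 0 & phik (lam1 T) (m3 T) = 0] /\
  [/\ phik (lam2 T) (m1 T) = 0, phik (lam2 T) (m2 T) = 1 & phik (lam2 T) (m3 T) = 0] /\
  [/\ phik (lam3 T) (m1 T) = 0, phik (lam3 T) (m2 T) = 0 & phik (lam3 T) (m3 T) = 1].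
Proof.
rewrite /Defs.nondegenerate /phik /lam1 /lam2 /lam3 /triD /midpt.
case: T => [[[a1 a2] [b1 b2]] [c1 c2]].
rewrite /det2 /tv1 /tv2 /tv3 /= => nd.
by do ![split]; field.
Qed.

Lemma mid_neq T : Defs.nondegenerate T ->
  [/\ m1 T != m2 T, m2 T != m3 T & m1 T != m3 T].
Proof.
rewrite /Defs.nondegenerate /midpt.
case: T => [[[a1 a2] [b1 b2]] [c1 c2]].
rewrite /det2 /tv1 /tv2 /tv3 /= => nd.
split; apply: contra nd => /eqP [e1 e2]; apply/eqP.
- have E1 : (b1 + c1) / 2 = (c1 + a1) / 2 := e1.
  have E2 : (b2 + c2) / 2 = (c2 + a2) / 2 := e2.
  have -> : b1 = a1 by clear -E1; lra.
  have -> : b2 = a2 by clear -E2; lra.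
  ring.
- have E1 : (c1 + a1) / 2 = (a1 + b1) / 2 := e1.
  have E2 : (c2 + a2) / 2 = (a2 + b2) / 2 := e2.
  have -> : c1 = b1 by clear -E1; lra.
  have -> : c2 = b2 by clear -E2; lra.
  ring.
- have E1 : (b1 + c1) / 2 = (a1 + b1) / 2 := e1.
  have E2 : (b2 + c2) / 2 = (a2 + b2) / 2 := e2.
  have -> : c1 = a1 by clear -E1; lra.
  have -> : c2 = a2 by clear -E2; lra.
  ring.
Qed.

Definition crT (z : pt R) T (x : pt R) : R :=
  if z == m1 T then phik (lam1 T) x
  else if z == m2 T then phik (lam2 T) x
  else if z == m3 T then phik (lam3 T) x else 0.

Lemma isP1_crT z T : isP1 (crT z T).
Proof.
rewrite /crT; case: (z == m1 T); first exact: (isP1_phik (isP1_lam1 T)).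
case: (z == m2 T); first exact: (isP1_phik (isP1_lam2 T)).
case: (z == m3 T); first exact: (isP1_phik (isP1_lam3 T)).
exact: isP1_cst.
Qed.

Lemma crT_mid z T m : Defs.nondegenerate T -> m \in midpoints T ->
  crT z T m = (m == z)%:R.
Proof.
move=> nd; have [[p11 p12 p13] [[p21 p22 p23] [p31 p32 p33]]] := phik_mid nd.
have [n12 n23 n13] := mid_neq nd.
rewrite /midpoints !inE => /orP[/eqP->|/orP[/eqP->|/eqP->]]; rewrite /crT.
- rewrite [(_ == z)]eq_sym.
  have [E|h1] := eqVneq z (m1 T); first by rewrite p11.
  have [E|h2] := eqVneq z (m2 T); first by rewrite p21.
  by have [E|h3] := eqVneq z (m3 T); [rewrite p31|].
- rewrite [(_ == z)]eq_sym.
  have [E|h1] := eqVneq z (m1 T); first by rewrite p12 E (negbTE n12).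
  have [E|h2] := eqVneq z (m2 T); first by rewrite p22.
  by have [E|h3] := eqVneq z (m3 T); [rewrite p32|].
- rewrite [(_ == z)]eq_sym.
  have [E|h1] := eqVneq z (m1 T); first by rewrite p13 E (negbTE n13).
  have [E|h2] := eqVneq z (m2 T); first by rewrite p23 E (negbTE n23).
  by have [E|h3] := eqVneq z (m3 T); [rewrite p33|].
Qed.

End Mid.


Section Disc.
Variable R : realType.
Variables (Om : set (pt R)) (n : nat) (Th : 'I_n -> tri R).

Definition vcr (c : R) (z : pt R) : 'I_n -> pt R -> R := fun j x => c * crT z (Th j) x.

Lemma Vnc_vcr c z : (forall j, Defs.nondegenerate (Th j)) -> Om z -> Vnc Om Th (vcr c z).
Proof.
move=> nd Oz; split.
- by move=> j; apply: isP1_scale; exact: isP1_crT.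
- by move=> i j z' hi hj _; rewrite /vcr !crT_mid.
- move=> i z' hi Oz'; rewrite /vcr crT_mid //.
  have -> : (z' == z) = false by apply/negbTE/eqP => E; apply: Oz'; rewrite E.
  by rewrite mulr0.
Qed.

Lemma ncval_vcr c z z' : (forall j, Defs.nondegenerate (Th j)) ->
  (exists j, z' \in midpoints (Th j)) -> ncval Th (vcr c z) z' = c * (z' == z)%:R.
Proof.
move=> nd [j hj]; rewrite /ncval; case: pickP => [k hk|none].
  by rewrite /vcr crT_mid.
by have := none j; rewrite hj.
Qed.

Lemma Mhi_list_mem z : Om z -> (exists i, z \in midpoints (Th i)) -> z \in Mhi_list Om Th.
Proof.
move=> Oz [i hi]; rewrite /Mhi_list mem_filter; apply/andP; split.
  by apply/asboolP.
rewrite mem_undup; apply/flatten_mapP; exists i => //; exact: mem_enum.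
Qed.

Lemma Mhi_list_mid z : z \in Mhi_list Om Th -> exists j, z \in midpoints (Th j).
Proof.
rewrite /Mhi_list mem_filter => /andP[_]; rewrite mem_undup => /flatten_mapP[j _ hj].
by exists j.
Qed.

Lemma Mhi_list_uniq : uniq (Mhi_list Om Th).
Proof. by apply: filter_uniq; exact: undup_uniq. Qed.

Lemma Pih_vcr (psi : pt R -> pt R -> R) c z : (forall j, Defs.nondegenerate (Th j)) ->
  Om z -> (exists i, z \in midpoints (Th i)) ->
  Pih Om Th psi (vcr c z) = fun x => c * psi z x.
Proof.
move=> nd Oz hz; apply/funext => x; rewrite /Pih.
rewrite (big_rem z) /=; last exact: Mhi_list_mem.
rewrite ncval_vcr // eqxx mulr1 big1_seq ?addr0 // => z' /andP[_ hz'].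
have u := Mhi_list_uniq.
have nz : z' != z.
  by apply/eqP => E; move: hz'; rewrite E mem_rem_uniqF.
rewrite ncval_vcr ?(negbTE nz) ?mulr0 ?mul0r //.
by apply: Mhi_list_mid; exact: (mem_rem hz').
Qed.


Definition Kz (z : pt R) : R :=
  \sum_(j < n) area (Th j) / 3 * \sum_(m <- midpoints (Th j)) (m == z)%:R.

Lemma iph_vcr (sigma : 'I_n -> pt R -> R) c z i0 :
  (forall j, Defs.nondegenerate (Th j)) -> Vnc Om Th sigma -> Om z ->
  z \in midpoints (Th i0) ->
  ip_h Th sigma (vcr c z) = c * sigma i0 z * Kz z.
Proof.
move=> nd [_ Vs _] Oz hz.
rewrite /ip_h /Kz mulr_sumr; apply: eq_bigr => j _.
have -> : \sum_(m <- midpoints (Th j)) sigma j m * vcr c z j m =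
    c * sigma i0 z * \sum_(m <- midpoints (Th j)) (m == z)%:R.
  rewrite mulr_sumr big_seq [RHS]big_seq; apply: eq_bigr => m hm.
  rewrite /vcr crT_mid //.
  have [E|ne] := eqVneq m z.
    by rewrite E (Vs j i0 z) //; [ring | rewrite -E].
  by rewrite !mulr0.
ring.
Qed.

Lemma area_gt0 (T : tri R) : Defs.nondegenerate T -> 0 < area T.
Proof.
by rewrite /Defs.nondegenerate /area => nd; apply: divr_gt0 => //; rewrite normr_gt0.
Qed.

Lemma Kz_gt0 z i0 : (forall j, Defs.nondegenerate (Th j)) ->
  z \in midpoints (Th i0) -> 0 < Kz z.
Proof.
move=> nd hz.
have hb : forall b : bool, 0 <= b%:R :> R by case.
rewrite /Kz (bigD1 i0) //=.
have a0 := area_gt0 (nd i0).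
have s1 : 1 <= \sum_(m <- midpoints (Th i0)) (m == z)%:R :> R.
  move: hz; rewrite /midpoints !big_cons big_nil !inE addr0.
  have h1 := hb (midpt (tv2 (Th i0)) (tv3 (Th i0)) == z).
  have h2 := hb (midpt (tv3 (Th i0)) (tv1 (Th i0)) == z).
  have h3 := hb (midpt (tv1 (Th i0)) (tv2 (Th i0)) == z).
  by case/orP => [/eqP E|/orP[/eqP E|/eqP E]]; move: h1 h2 h3; rewrite -E eqxx /= => h1 h2 h3;
    clear -h1 h2 h3; lra.
have r0 : 0 <= \sum_(j < n | j != i0) area (Th j) / 3 *
    \sum_(m <- midpoints (Th j)) (m == z)%:R.
  apply: sumr_ge0 => j _; apply: mulr_ge0.
    by apply: divr_ge0 => //; apply: divr_ge0 => //; exact: normr_ge0.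
  by apply: sumr_ge0 => m _; exact: hb.
move: r0 s1 a0.
set A := area (Th i0); set S := \sum_(m <- _) _; set Q := \sum_(j < n | _) _.
move=> r0 s1 a0; clear -r0 s1 a0; nra.
Qed.

End Disc.


Section Main.
Variable R : realType.
Variables (Om : set (pt R)) (n : nat) (Th : 'I_n -> tri R).

Lemma isP2_comb (p q : pt R -> R) (c : R) : isP2 p -> isP2 q -> isP2 (fun x => p x + c * q x).
Proof.
case=> a0 [a1 [a2 [a3 [a4 [a5 ea]]]]] [b0 [b1 [b2 [b3 [b4 [b5 eb]]]]]].
exists (a0 + c * b0), (a1 + c * b1), (a2 + c * b2), (a3 + c * b3), (a4 + c * b4), (a5 + c * b5).
by move=> x; rewrite ea eb; ring.
Qed.

Lemma node_mid z i : Om z -> z \in midpoints (Th i) -> node Om Th z.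
Proof. by move=> Oz hz; right; split => //; exists i. Qed.

Lemma Kh_add (chi uh : pt R -> R) (psi : pt R -> pt R -> R) c z i0 :
  (forall z, node Om Th z ->
     Vh Om Th (psi z) /\
     forall z', node Om Th z' -> psi z z' = (if z == z' then 1 else 0)) ->
  Kh Om Th chi uh -> Om z -> z \in midpoints (Th i0) -> chi z <= uh z + c ->
  Kh Om Th chi (fun x => uh x + c * psi z x).
Proof.
move=> hpsi [[cu pu ou] obs] Oz hz hc.
have [[cp pp op] dp] := hpsi z (node_mid Oz hz).
split; first split.
- move=> x.
  exact: (continuousD (cu x) (continuousM (@cvg_cst _ c _ _ _) (cp x))).
- move=> j; have [p1 [P1 e1]] := pu j; have [p2 [P2 e2]] := pp j.
  exists (fun x => p1 x + c * p2 x); split; first exact: isP2_comb.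
  by move=> x hx; rewrite e1 ?e2.
- by move=> x Ox; rewrite ou ?op // mulr0 addr0.
- move=> z' Mz'.
  case: (pselect (Om z')) => Oz'.
    have := dp z' (or_intror (conj Mz' Oz')).
    have [E|ne] := eqVneq z z'; first by move=> ->; rewrite mulr1 -E.
    by move=> ->; rewrite mulr0 addr0; exact: obs.
  by rewrite op // mulr0 addr0; exact: obs.
Qed.


Lemma sigma_mid (f chi : pt R -> R) (psi : pt R -> pt R -> R) (uh : pt R -> R)
  (sigma : 'I_n -> pt R -> R) i m :
  (forall j, Defs.nondegenerate (Th j)) ->
  (forall z, node Om Th z ->
     Vh Om Th (psi z) /\
     forall z', node Om Th z' -> psi z z' = (if z == z' then 1 else 0)) ->
  Kh Om Th chi uh ->
  (forall v, Kh Om Th chi v ->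
     l2ip Om f (fun x => v x - uh x) <= a_form Om uh (fun x => v x - uh x)) ->
  Vnc Om Th sigma ->
  (forall v, Vnc Om Th v ->
     ip_h Th sigma v = l2ip Om f (Pih Om Th psi v) - a_form Om uh (Pih Om Th psi v)) ->
  m \in midpoints (Th i) ->
  sigma i m <= 0 /\ (chi m < uh m -> sigma i m = 0).
Proof.
move=> nd hpsi Khu VI Vs Seq hm.
case: (pselect (Om m)) => Om_m; last first.
  by have [_ _ Vb] := Vs; rewrite Vb.
have key : forall c, chi m <= uh m + c -> c * sigma i m * Kz Th m <= 0.
  move=> c hc.
  have kh := Kh_add (c:=c) hpsi Khu Om_m hm hc.
  have := VI _ kh.
  have -> : (fun x => uh x + c * psi m x - uh x) = (fun x => c * psi m x).
    by apply/funext => x; ring.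
  have := Seq _ (Vnc_vcr c nd Om_m).
  rewrite (Pih_vcr psi c nd Om_m) ?(iph_vcr c nd Vs Om_m hm) //; last by exists i.
  move=> -> h; clear -h; lra.
have K0 := Kz_gt0 nd hm.
have obs : chi m <= uh m by case: Khu => _ ob; apply: ob; exists i.
have k1 := key 1 (ler_wpDr ler01 obs).
have le : sigma i m <= 0.
  move: k1 K0; set K := Kz Th m; set s := sigma i m; move=> k1 K0.
  clear -k1 K0; nra.
split => // hlt.
have k2 : (chi m - uh m) * sigma i m * Kz Th m <= 0.
  by apply: key; rewrite addrC subrK.
apply: le_anti; rewrite le /=.
move: k2 K0 hlt; set K := Kz Th m; set s := sigma i m; set d := chi m - uh m.
move=> k2 K0 hlt.
have d0 : d < 0 by rewrite /d subr_lt0.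
have dK : d * K < 0 by rewrite pmulr_llt0.
have k3 : (d * K) * s <= 0 by rewrite -mulrA (mulrC K) mulrA.
clear -k3 dK; nra.
Qed.

End Main.

Unset Implicit Arguments. Set Strict Implicit. Set Printing Implicit Defensive.

Theorem lemma3p3 (R : realType) (Om : set (pt R)) (n : nat) (Th : 'I_n -> tri R)
  (f chi : pt R -> R) (psi : pt R -> pt R -> R) (uh : pt R -> R)
  (sigma : 'I_n -> pt R -> R) :
  domain Om -> conforming Om Th ->
  L2 Om f ->
  {within closure Om, continuous chi} -> H1 Om chi ->
  (forall x, closure Om x -> ~ Om x -> chi x <= 0) ->
  (forall z, node Om Th z ->
     Vh Om Th (psi z) /\
     forall z', node Om Th z' -> psi z z' = (if z == z' then 1 else 0)) ->
  Kh Om Th chi uh ->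
  (forall v, Kh Om Th chi v ->
     l2ip Om f (fun x => v x - uh x) <= a_form Om uh (fun x => v x - uh x)) ->
  Vnc Om Th sigma ->
  (forall v, Vnc Om Th v ->
     ip_h Th sigma v = l2ip Om f (Pih Om Th psi v) - a_form Om uh (Pih Om Th psi v)) ->
  forall i : 'I_n,
    elem_mean Th sigma i <= 0 /\ (inNh Th uh chi i -> elem_mean Th sigma i = 0).
Proof.
move=> _ [nd _ _] _ _ _ _ hpsi Khu VI Vs Seq i.
have hmid := fun m (hm : m \in midpoints (Th i)) =>
  sigma_mid nd hpsi Khu VI Vs Seq hm.
have sP : isP1 (sigma i) by case: Vs => h _ _; exact: h.
split.
  rewrite /elem_mean; apply: mulr_ge0_le0.
    by rewrite invr_ge0; apply: ltW; exact: area_gt0.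
  exact: (mean_le0 (nd i) sP (fun m hm => (hmid m hm).1)).
move=> Nh; rewrite /elem_mean.
rewrite (mean_zero (nd i) sP (fun m hm => (hmid m hm).2 (Nh m hm))).
by rewrite mulr0.
Qed.
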